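(* Let $n\ge1$, $p$ a prime, $R\subset E_n$, and $S\subset E_n$ with $|S|\geq2$. The following are equivalent: (i) $\mathcal{C}_{R,S}=\mathcal{C}_{\mathsf{pHa},S}$; (ii) $\mathcal{C}_{\mathsf{pHa},S}$ is a homogeneous $S$-adapted $p$-cone, i.e. there is $T\subset E_n$ with $\mathcal{C}_{\mathsf{pHa},S}=\{x\in\mathbb{Z}^n:F^{(i)}_T(x)\le0\ \forall i\in S\}$; (iii) for every connected component $C$ of the chain diagram $\Gamma_n(R,S)$, the integers $\#(C\cap R)$ and $\#C$ have different parity.
   Context: $E_n=\{1,\dots,n\}$, indices mod $n$; $e_i$ standard basis of $\mathbb{Z}^n$ ($e_0=e_n$). For $U\subset E_n$, $\delta_U^{(i)}=-1$ if $i\in U$, else $1$. $F^{(d)}_T(x)=\sum_{i=0}^{n-1}p^i\delta_T^{(d+i)}x_{d+i}$. Saturation of a submonoid $A\subset\mathbb{Z}^n$: $\{x:mx\in A\text{ for some }m\ge1\}$. $\mathsf{ha}^{(i)}_{R,S}=-\delta_S^{(i)}e_i-p\delta_R^{(i-1)}e_{i-1}$; $\mathcal{C}_{\mathsf{pHa},S}$ is the saturation of $\sum_{i\in S}\mathbb{N}\mathsf{ha}^{(i)}_{R,S}+\sum_{i\notin S}\mathbb{Z}\mathsf{ha}^{(i)}_{R,S}$. $\mathcal{C}_{R,S}=\{x:F^{(i)}_{T'}(x)\le0\ \forall i\in S\}$ where $T'$ is the unique subset with: for each $i$ with $i+1\notin S$, if $i\notin R$ exactly one of $i,i+1$ is in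 $T'$, and if $i\in R$ both or neither are; and for each $i\in S$, $i-1\in T'\iff i-1\in R$. The chain diagram $\Gamma_n(R,S)$ has vertices $E_n$, with $i$ and $i+1$ joined by an edge exactly when $i+1\notin S$; its connected components are the maximal sets connected by edges, namely the cyclic intervals from an element $s\in S$ to (the next element of $S$ after $s$) minus one. *)

(* Defs.v *)
(* E_n = {1,...,n} is identified with 'I_n via k |-> k mod n
   (so the index n, i.e. e_0 = e_n, is the ordinal 0). Z^n = functions 'I_n -> int. *)
From mathcomp Require Import all_boot all_order all_algebra.
Set Implicit Arguments. Unset Strict Implicit. Unset Printing Implicit Defensive.
Import Order.TTheory GRing.Theory Num.Theory.
Local Open Scope ring_scope.

Definition idx (n : nat) (k : nat) (j : 'I_n) : bool := val j == (k %% n)%N.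

Definition memI (n : nat) (U : {set 'I_n}) (k : nat) : bool :=
  [exists j : 'I_n, idx k j && (j \in U)].

Definition dlt (n : nat) (U : {set 'I_n}) (k : nat) : int :=
  if memI U k then -1 else 1.

Definition coord (n : nat) (x : 'I_n -> int) (k : nat) : int :=
  \sum_(j : 'I_n | idx k j) x j.

Definition Fp (n p : nat) (T : {set 'I_n}) (d : nat) (x : 'I_n -> int) : int :=
  \sum_(i < n) (p ^ i)%:R * dlt T (d + i) * coord x (d + i).

Definition evec (n : nat) (k : nat) (j : 'I_n) : int := if idx k j then 1 else 0.

(* ha^{(i)}_{R,S} = - delta_S^{(i)} e_i - p delta_R^{(i-1)} e_{i-1};
   the index i-1 is written i + (n-1) (mod n). *)
Definition ha (n p : nat) (R S : {set 'I_n}) (i : 'I_n) (j : 'I_n) : int :=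
  - dlt S i * evec i j - p%:R * dlt R (i + n.-1) * evec (i + n.-1) j.

Definition pHa_monoid (n p : nat) (R S : {set 'I_n}) (y : 'I_n -> int) : Prop :=
  exists c : 'I_n -> int, (forall i, i \in S -> 0 <= c i) /\
    forall j, y j = \sum_(i : 'I_n) c i * ha p R S i j.

Definition C_pHa (n p : nat) (R S : {set 'I_n}) (x : 'I_n -> int) : Prop :=
  exists m : nat, (0 < m)%N /\ pHa_monoid p R S (fun j => m%:Z * x j).

Definition p_cone (n p : nat) (T S : {set 'I_n}) (x : 'I_n -> int) : Prop :=
  forall i : 'I_n, i \in S -> Fp p T i x <= 0.

Definition Tprime_cond (n : nat) (R S T : {set 'I_n}) : Prop :=
  (forall i : 'I_n, ~~ memI S (i + 1) ->
     if i \in R then (i \in T) = memI T (i + 1)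
     else (i \in T) != memI T (i + 1)) /\
  (forall i : 'I_n, i \in S -> memI T (i + n.-1) = memI R (i + n.-1)).

Definition C_RS (n p : nat) (R S : {set 'I_n}) (x : 'I_n -> int) : Prop :=
  exists T : {set 'I_n}, Tprime_cond R S T /\ p_cone p T S x.

Definition chain_edge (n : nat) (S : {set 'I_n}) : rel 'I_n :=
  fun i j => (idx (i + 1) j && ~~ memI S (i + 1)) ||
             (idx (j + 1) i && ~~ memI S (j + 1)).

Definition chain_component (n : nat) (S : {set 'I_n}) (x : 'I_n) : {set 'I_n} :=
  [set y | connect (chain_edge S) x y].

(* Main.v *)
Require Import Defs.
From mathcomp Require Import all_boot all_order all_algebra.
From mathcomp Require Import zify ring lra.
Set Implicit Arguments. Unset Strict Implicit. Unset Printing Implicit Defensive.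
Import Order.TTheory GRing.Theory Num.Theory.
Local Open Scope ring_scope.

Section Basics.
Variable n : nat.
Local Notation N := n.+1.

Definition om (k : nat) : 'I_N := Ordinal (ltn_pmod k (ltn0Sn n)).

Lemma val_om k : val (om k) = (k %% N)%N. Proof. by []. Qed.

Lemma idxE k (j : 'I_N) : idx k j = (j == om k).
Proof. by rewrite /idx -val_eqE. Qed.

Lemma om_val (j : 'I_N) : om j = j.
Proof. by apply: val_inj; rewrite /= modn_small. Qed.

Lemma om_modE k k' : (k = k' %[mod N])%N -> om k = om k'.
Proof. by move=> h; apply: val_inj; rewrite /= h. Qed.

Lemma om_eq k k' : (om k == om k') = (k == k' %[mod N])%N.
Proof. by rewrite -val_eqE. Qed.

Lemma om_om k : om (om k) = om k.
Proof. by apply: om_modE; rewrite /= modn_mod. Qed.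

Lemma memIE (U : {set 'I_N}) k : memI U k = (om k \in U).
Proof.
apply/existsP/idP => [[j /andP[]]|h]; first by rewrite idxE => /eqP->.
by exists (om k); rewrite idxE eqxx.
Qed.

Lemma memI_ord (U : {set 'I_N}) (j : 'I_N) : memI U j = (j \in U).
Proof. by rewrite memIE om_val. Qed.

Lemma memI_mod (U : {set 'I_N}) k k' : (k = k' %[mod N])%N -> memI U k = memI U k'.
Proof. by move=> h; rewrite !memIE (om_modE h). Qed.

Lemma coordE (x : 'I_N -> int) k : Defs.coord x k = x (om k).
Proof. by rewrite /Defs.coord (eq_bigl (pred1 (om k))) ?big_pred1_eq // => j; rewrite idxE. Qed.

Lemma dltE (U : {set 'I_N}) k : dlt U k = if om k \in U then -1 else 1.
Proof. by rewrite /dlt memIE. Qed.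

Lemma dlt_mod (U : {set 'I_N}) k k' : (k = k' %[mod N])%N -> dlt U k = dlt U k'.
Proof. by move=> h; rewrite /dlt (memI_mod _ h). Qed.

Lemma dlt_om (U : {set 'I_N}) k : dlt U (om k) = dlt U k.
Proof. by apply: dlt_mod; rewrite /= modn_mod. Qed.

Lemma dlt_sq (U : {set 'I_N}) k : dlt U k * dlt U k = 1.
Proof. by rewrite /dlt; case: (memI U k); rewrite ?mulrNN mulr1. Qed.

Lemma dlt_cases (U : {set 'I_N}) k : dlt U k = -1 \/ dlt U k = 1.
Proof. by rewrite /dlt; case: ifP; [left|right]. Qed.

Lemma evecE k (j : 'I_N) : evec k j = (j == om k)%:R.
Proof. by rewrite /evec idxE; case: eqP. Qed.

Lemma modN2 x : (x < N + N)%N -> (x %% N = if (x < N)%N then x else x - N)%N.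
Proof.
move=> h2; case: (ltnP x N) => h1; first by rewrite modn_small.
by rewrite -{1}(subnK h1) modnDr modn_small //; lia.
Qed.

Definition ka (r : nat) (j : 'I_N) : 'I_N := om (j + N - r %% N).

Lemma om_r_ka r j : om (r + ka r j) = j.
Proof.
apply: val_inj; rewrite /= modnDmr.
have e := divn_eq r N; have lt := ltn_pmod r (ltn0Sn n).
have -> : (r + (j + N - r %% N) = j + (r %/ N).+1 * N)%N by lia.
by rewrite addnC modnMDl modn_small.
Qed.

Lemma ka_inj r : injective (ka r).
Proof. by apply: (can_inj (g := fun k : 'I_N => om (r + k))) => j; rewrite om_r_ka. Qed.

Lemma ka_mod r : ka (r %% N) =1 ka r.
Proof. by move=> j; rewrite /ka modn_mod. Qed.

Lemma ka_rr (r : 'I_N) : ka r r = ord0.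
Proof. apply: val_inj; rewrite /= (modn_small (ltn_ord r)); have -> : (r + N - r = N)%N by lia. by rewrite modnn. Qed.

Lemma ka_pred (r u : 'I_N) :
  ((ka r (om (u + n))).+1 = if u == r then N else ka r u)%N.
Proof.
rewrite /ka /= !(modn_small (ltn_ord r)) -val_eqE /=.
have hu := ltn_ord u; have hr := ltn_ord r.
rewrite (modN2 (x := (u + n)%N)); last lia.
rewrite !modN2; try lia; repeat case: ifP; lia.
Qed.

End Basics.
Arguments om {n} k.

Section Fp.
Variables (n p : nat).
Local Notation N := n.+1.
Implicit Types (T R S : {set 'I_N}) (x : 'I_N -> int).

Lemma Fp_rot T d x :
  Fp p T d x = \sum_(j : 'I_N) (p ^ ka d j)%:R * dlt T j * x j.
Proof.
rewrite /Fp (reindex_inj (@ka_inj n d)); apply: eq_bigr => j _.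
by rewrite coordE -dlt_om om_r_ka.
Qed.

Lemma Fp_mod T d x : Fp p T (d %% N) x = Fp p T d x.
Proof. by rewrite !Fp_rot; apply: eq_bigr => j _; rewrite ka_mod. Qed.

Lemma Fp_ext T d x y : (forall j, x j = y j) -> Fp p T d x = Fp p T d y.
Proof. by move=> h; rewrite !Fp_rot; apply: eq_bigr => j _; rewrite h. Qed.

Lemma Fp_scale T d x (m : int) : Fp p T d (fun j => m * x j) = m * Fp p T d x.
Proof. by rewrite !Fp_rot mulr_sumr; apply: eq_bigr => j _; ring. Qed.

Lemma Fp_tele T d x :
  Fp p T d x = p%:R * Fp p T d.+1 x + (1 - (p ^ N)%:R) * dlt T d * x (om d).
Proof.
rewrite /Fp big_ord_recl big_ord_recr /= !addn0 expn0 mul1r !coordE.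
have -> : (om (d.+1 + n) : 'I_N) = om d by apply: om_modE; rewrite addSnnS modnDr.
have -> : dlt T (d.+1 + n) = dlt T d by apply: dlt_mod; rewrite addSnnS modnDr.
rewrite mulrDr mulr_sumr.
have -> : \sum_(i < n) (p ^ bump 0 i)%:R * dlt T (d + bump 0 i) * Defs.coord x (d + bump 0 i)
   = \sum_(i < n) p%:R * ((p ^ i)%:R * dlt T (d.+1 + i) * Defs.coord x (d.+1 + i)).
  apply: eq_bigr => i _; rewrite /bump /= add1n addnS -addSn expnS natrM; ring.
rewrite expnS natrM; ring.
Qed.

End Fp.

Section Mv.
Variables (n p : nat) (R S : {set 'I_n.+1}).
Local Notation N := n.+1.
Implicit Types (T : {set 'I_N}) (x c : 'I_N -> int).

Lemma sum_pick (F : 'I_N -> int) a : \sum_i F i * (i == a)%:R = F a.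
Proof.
rewrite (bigD1 a) //= eqxx mulr1 big1 ?addr0 // => i /negbTE ->; by rewrite mulr0.
Qed.

Lemma pred_eq (i j : 'I_N) : (j == om (i + n)) = (i == om (j + 1)).
Proof.
have hi := ltn_ord i; have hj := ltn_ord j.
rewrite -!val_eqE /= !modN2; try lia; repeat case: ifP => ?; apply/eqP/eqP; lia.
Qed.

Lemma succ_pred (u : 'I_N) : om ((om (u + n) : 'I_N) + 1) = u.
Proof. by apply/eqP; rewrite eq_sym -pred_eq. Qed.

Lemma pred_succ (u : 'I_N) : om ((om (u + 1) : 'I_N) + n) = u.
Proof. by apply/eqP; rewrite eq_sym pred_eq. Qed.

Lemma pred_inj : injective (fun u : 'I_N => (om (u + n) : 'I_N)).
Proof. exact: (can_inj (g := fun u : 'I_N => (om (u + 1) : 'I_N))) succ_pred. Qed.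

Lemma succ_inj : injective (fun u : 'I_N => (om (u + 1) : 'I_N)).
Proof. exact: (can_inj (g := fun u : 'I_N => (om (u + n) : 'I_N))) pred_succ. Qed.

Definition Mv c (j : 'I_N) : int := \sum_i c i * ha p R S i j.

Lemma MvE c j : Mv c j = - dlt S j * c j - p%:R * dlt R j * c (om (j + 1)).
Proof.
rewrite /Mv /ha /=.
have -> : \sum_(i : 'I_N) c i * (- dlt S i * evec i j - p%:R * dlt R (i + n) * evec (i + n) j)
   = \sum_(i : 'I_N) (- c i * dlt S i) * (i == j)%:R
     - \sum_(i : 'I_N) (p%:R * dlt R (i + n) * c i) * (i == om (j + 1))%:R.
  rewrite -sumrB; apply: eq_bigr => i _; rewrite !evecE om_val pred_eq [j == i]eq_sym; ring.
rewrite !sum_pick.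
have -> : dlt R ((om (j + 1) : 'I_N) + n) = dlt R j.
  by apply: dlt_mod; rewrite modnDml addnAC -addnA addn1 modnDr.
ring.
Qed.

Definition W T (r u : 'I_N) : int :=
  - ((p ^ ka r u)%:R * dlt T u * dlt S u
     + (p ^ (ka r (om (u + n) : 'I_N)).+1)%:R * dlt T (u + n) * dlt R (u + n)).

Lemma FMc T (r : 'I_N) c : Fp p T r (Mv c) = \sum_u c u * W T r u.
Proof.
rewrite Fp_rot.
transitivity (\sum_(j : 'I_N) (- ((p ^ ka r j)%:R * dlt T j * dlt S j * c j))
   - \sum_(j : 'I_N) ((p ^ (ka r j).+1)%:R * dlt T j * dlt R j * c (om (j + 1)))).
  rewrite -sumrB; apply: eq_bigr => j _; rewrite MvE expnS natrM; ring.
rewrite [X in _ - X](reindex_inj pred_inj) -sumrB; apply: eq_bigr => u _.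
by rewrite succ_pred !dlt_om /W; ring.
Qed.

Lemma W_same T r : W T r r =
  - (dlt T r * dlt S r + (p ^ N)%:R * dlt T (r + n) * dlt R (r + n)).
Proof. by rewrite /W ka_pred eqxx ka_rr expn0 mul1r. Qed.

Lemma W_diff T r u : u != r -> W T r u =
  - ((p ^ ka r u)%:R * (dlt T u * dlt S u + dlt T (u + n) * dlt R (u + n))).
Proof. by move=> h; rewrite /W ka_pred (negbTE h); ring. Qed.

Lemma Mv_lin c1 c2 (a b : int) j :
  Mv (fun i => a * c1 i + b * c2 i) j = a * Mv c1 j + b * Mv c2 j.
Proof. by rewrite !MvE; ring. Qed.

End Mv.

Section Cond.
Variables (n : nat) (R S : {set 'I_n.+1}).
Local Notation N := n.+1.
Implicit Types (T : {set 'I_N}).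

Lemma modS k k' : (k = k' %[mod N])%N -> (k.+1 = k'.+1 %[mod N])%N.
Proof. by move=> h; rewrite -[k.+1]addn1 -[k'.+1]addn1 -modnDml h modnDml. Qed.

Lemma predk k : ((om (k + 1) : 'I_N) + n = k %[mod N])%N.
Proof. by rewrite /= modnDml addn1 addSnnS modnDr. Qed.

Lemma condN1 T : Tprime_cond R S T ->
  forall k, ~~ memI S (k + 1) -> memI T k = (memI R k == memI T (k + 1)).
Proof.
case=> h1 _ k hk.
have e1 : memI S ((om k : 'I_N) + 1) = memI S (k + 1) by apply: memI_mod; rewrite modnDml.
have e2 : memI T ((om k : 'I_N) + 1) = memI T (k + 1) by apply: memI_mod; rewrite modnDml.
move: (h1 (om k)); rewrite e1 e2 => /(_ hk).
rewrite !memIE; case: (om k \in R); case: (om k \in T); by case: (om (k + 1) \in T).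
Qed.

Lemma condN2 T : Tprime_cond R S T ->
  forall k, memI S (k + 1) -> memI T k = memI R k.
Proof.
case=> _ h2 k hk; have hs : om (k + 1) \in S by rewrite -memIE.
by move: (h2 _ hs) => /=; rewrite !(memI_mod _ (predk k)).
Qed.

Lemma cond_of T :
  (forall k, ~~ memI S (k + 1) -> memI T k = (memI R k == memI T (k + 1))) ->
  (forall k, memI S (k + 1) -> memI T k = memI R k) -> Tprime_cond R S T.
Proof.
move=> H1 H2; split.
  move=> i hi; have := H1 i hi; rewrite !memI_ord => ->.
  by case: (i \in R); case: (memI T (i + 1)).
move=> i hi /=; apply: H2; rewrite (@memI_mod n S _ i) ?memI_ord //.
by rewrite -addnA addn1 modnDr.
Qed.

Lemma ratio1 T : Tprime_cond R S T ->
  forall k, ~~ memI S (k + 1) -> dlt T (k + 1) = - dlt R k * dlt T k.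
Proof.
move=> hc k hk; rewrite /dlt (condN1 hc hk).
by case: (memI R k); case: (memI T (k + 1)); rewrite /= ?mulN1r ?mul1r ?opprK.
Qed.

Lemma ratio2 T : Tprime_cond R S T ->
  forall k, memI S (k + 1) -> dlt T k = dlt R k.
Proof. by move=> hc k hk; rewrite /dlt (condN2 hc hk). Qed.

Lemma reach (s : 'I_N) : s \in S ->
  forall k, exists d, (0 < d <= N)%N && memI S (k + d).
Proof.
move=> hs k; exists ((s + N - k.+1 %% N) %% N).+1.
rewrite ltn0Sn ltn_pmod //=.
rewrite (@memI_mod n S _ s) ?memI_ord //.
have e := divn_eq k.+1 N; have lt := ltn_pmod k.+1 (ltn0Sn n).
rewrite addnS -addSn.
rewrite modnDmr.
move: e lt; move: (k.+1 %/ N)%N (k.+1 %% N)%N => q m e lt.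
have -> : (k.+1 + (s + N - m) = s + q.+1 * N)%N by lia.
by rewrite addnC modnMDl.
Qed.

Lemma cond_uniq T1 T2 : Tprime_cond R S T1 -> Tprime_cond R S T2 ->
  (exists s, s \in S) -> T1 = T2.
Proof.
move=> c1 c2 [s hs].
have claim : forall d k, (0 < d)%N -> memI S (k + d) -> memI T1 k = memI T2 k.
  elim=> [//|d IH] k _ hd.
  case hk: (memI S (k + 1)); first by rewrite (condN2 c1 hk) (condN2 c2 hk).
  rewrite (condN1 c1 (negbT hk)) (condN1 c2 (negbT hk)) (IH (k + 1)%N) //.
    by case: d {IH} hd => [|d] hd //; rewrite hd in hk.
  by rewrite -addnA add1n.
apply/setP => j; rewrite -!memI_ord.
by have [d /andP[/andP[d0 _] hd]] := reach hs j; apply: (claim d).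
Qed.

Fixpoint fw (f k : nat) : bool :=
  if f is f'.+1 then (if memI S (k + 1) then memI R k else (memI R k == fw f' (k + 1)))
  else false.

Lemma fw_stab d : forall k f1 f2, (0 < d)%N -> memI S (k + d) ->
  (d <= f1)%N -> (d <= f2)%N -> fw f1 k = fw f2 k.
Proof.
elim: d => [//|d IH] k [//|f1] [//|f2] _ hd l1 l2 /=.
case hk: (memI S (k + 1)) => //; congr (_ == _); apply: (IH) => //.
  by case: d {IH} hd l1 l2 => [|d] hd //; rewrite hd in hk.
by rewrite -addnA add1n.
Qed.

Lemma fw_mod f : forall k k', (k = k' %[mod N])%N -> fw f k = fw f k'.
Proof.
elim: f => [//|f IH] k k' h /=.
have h1 : (k + 1 = k' + 1 %[mod N])%N by rewrite !addn1; apply: modS.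
rewrite (memI_mod _ h1) (memI_mod _ h) (IH _ _ h1) //.
Qed.

Definition T0 : {set 'I_N} := [set j : 'I_N | fw N j].

Lemma memT0 k : memI T0 k = fw N k.
Proof. by rewrite memIE inE; apply: fw_mod; rewrite /= modn_mod. Qed.

Lemma cond_T0 (s : 'I_N) : s \in S -> Tprime_cond R S T0.
Proof.
move=> hs; apply: cond_of => k hk; rewrite !memT0.
  have -> : fw N k = (memI R k == fw n (k + 1)) by rewrite /= (negbTE hk).
  congr (_ == _).
  have [d /andP[/andP[d0 dN] hd]] := reach hs k.
  case: d d0 dN hd => [//|[|d]] _ dN hd; first by rewrite hd in hk.
  apply: (@fw_stab d.+1) => //.
    by rewrite -addnA add1n.
  exact: ltnW.
by rewrite /= hk.
Qed.

End Cond.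

Section Cone.
Variables (n p : nat) (R S : {set 'I_n.+1}).
Local Notation N := n.+1.
Implicit Types (T : {set 'I_N}) (x c : 'I_N -> int).
Hypothesis p_gt1 : (1 < p)%N.

Lemma dlt_in (U : {set 'I_N}) (u : 'I_N) : u \in U -> dlt U u = -1.
Proof. by move=> h; rewrite /dlt memI_ord h. Qed.
Lemma dlt_out (U : {set 'I_N}) (u : 'I_N) : u \notin U -> dlt U u = 1.
Proof. by move=> h; rewrite /dlt memI_ord (negbTE h). Qed.

Lemma predu (u : 'I_N) : (u + n + 1 = u %[mod N])%N.
Proof. by rewrite -addnA addn1 modnDr. Qed.

Lemma cond_pred T (u : 'I_N) : Tprime_cond R S T -> u \in S ->
  dlt T (u + n) * dlt R (u + n) = 1.
Proof.
move=> hc hu; rewrite (ratio2 hc) ?dlt_sq //.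
by rewrite (memI_mod _ (predu u)) memI_ord.
Qed.

Lemma cond_out T (u : 'I_N) : Tprime_cond R S T -> u \notin S ->
  dlt T u * dlt S u + dlt T (u + n) * dlt R (u + n) = 0.
Proof.
move=> hc hu; have h : ~~ memI S (u + n + 1) by rewrite (memI_mod _ (predu u)) memI_ord.
have := ratio1 hc h; rewrite (dlt_mod _ (predu u)) (dlt_out hu) => ->; ring.
Qed.

Lemma pN_ge1 : (1 <= (p ^ N)%:R :> int).
Proof. by rewrite ler1n expn_gt0 ltnW. Qed.

Lemma pN_ge2 : (2 <= (p ^ N)%:R :> int).
Proof.
rewrite (ler_nat int 2); apply: (leq_trans p_gt1).
by rewrite -{1}(expn1 p) leq_pexp2l // ltnW.
Qed.

Lemma pk_ge1 k : (1 <= (p ^ k)%:R :> int).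
Proof. by rewrite ler1n expn_gt0 ltnW. Qed.

Lemma pk2 (k : 'I_N) : (2 * (p ^ k)%:R <= (p ^ N)%:R :> int).
Proof.
rewrite -natrM ler_nat; apply: (@leq_trans (p * p ^ k)); first by rewrite leq_mul2r p_gt1 orbT.
by rewrite -expnS leq_pexp2l // ltnW.
Qed.

Lemma W_in T (r u : 'I_N) : Tprime_cond R S T -> u \in S ->
  W p R S T r u = if u == r then dlt T u - (p ^ N)%:R
                  else - ((p ^ ka r u)%:R * (1 - dlt T u)).
Proof.
move=> hc hu; case: eqP => [<-|/eqP ne].
  rewrite W_same (dlt_in hu) -mulrA (cond_pred hc hu); ring.
rewrite W_diff // (dlt_in hu) (cond_pred hc hu); ring.
Qed.

Lemma W_out T (r u : 'I_N) : Tprime_cond R S T -> r \in S -> u \notin S ->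
  W p R S T r u = 0.
Proof.
move=> hc hr hu; have ne : u != r by apply: contraNneq hu => ->.
by rewrite W_diff // (cond_out hc hu) mulr0 oppr0.
Qed.

Lemma W_le0 T (r u : 'I_N) : Tprime_cond R S T -> u \in S -> W p R S T r u <= 0.
Proof.
move=> hc hu; rewrite W_in //; have := pN_ge1; have := pk_ge1 (ka r u).
by case: eqP => _; case: (dlt_cases T u) => ->; lia.
Qed.

Lemma inc T x : Tprime_cond R S T -> C_pHa p R S x -> p_cone p T S x.
Proof.
move=> hc [m [m0 [c [cS hcx]]]] r hr.
have e : Fp p T r (fun j => m%:Z * x j) = Fp p T r (Mv p R S c).
  by apply: Fp_ext => j; rewrite hcx.
move: e; rewrite Fp_scale FMc => e.
have : m%:Z * Fp p T r x <= 0.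
  rewrite e; apply: sumr_le0 => u _.
  case hu: (u \in S); first by apply: mulr_ge0_le0; [exact: cS | exact: W_le0].
  by rewrite (W_out hc hr (negbT hu)) mulr0.
by rewrite pmulr_rle0 // ltz_nat.
Qed.

Lemma Mv_pick T (u : 'I_N) (sg : int) (r : 'I_N) :
  Fp p T r (Mv p R S (fun i => sg * (i == u)%:R)) = sg * W p R S T r u.
Proof.
rewrite FMc -(sum_pick (fun i => sg * W p R S T r i) u); apply: eq_bigr => i _; ring.
Qed.

Lemma nec T : (exists s, s \in S) ->
  (forall x, C_pHa p R S x -> p_cone p T S x) -> Tprime_cond R S T.
Proof.
move=> [s hs] H.
have key : forall (u : 'I_N) (sg : int), (u \in S -> 0 <= sg) ->
    forall r, r \in S -> sg * W p R S T r u <= 0.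
  move=> u sg hsg r hr; rewrite -Mv_pick; apply: H => //.
  exists 1%N; split => //; exists (fun i => sg * (i == u)%:R); split.
    by move=> i hi; case: eqP => [e|_]; rewrite ?mulr1 ?mulr0 //; apply: hsg; rewrite -e.
  by move=> j; rewrite mul1r.
apply: cond_of => k hk.
  set u : 'I_N := om (k + 1).
  have hu : u \notin S by rewrite -memIE.
  have ne : u != s by apply: contraNneq hu => ->.
  have h1 := key u 1 (fun h => False_ind _ (negP hu h)) s hs.
  have h2 := key u (-1) (fun h => False_ind _ (negP hu h)) s hs.
  have h0 : W p R S T s u = 0 by lia.
  move: h0; rewrite W_diff // (dlt_out hu) mulr1 => /eqP; rewrite oppr_eq0 mulf_eq0.
  rewrite pnatr_eq0 expn_eq0 eqn0Ngt (ltnW p_gt1) /= => /eqP.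
  rewrite dlt_om (dlt_mod T (@predk n k)) (dlt_mod R (@predk n k)) /dlt.
  by case: (memI T k); case: (memI R k); case: (memI T (k + 1)); lia.
set u : 'I_N := om (k + 1).
have hu : u \in S by rewrite -memIE.
have := key u 1 (fun _ => ler01) u hu; rewrite mul1r W_same (dlt_in hu).
rewrite !(dlt_mod _ (@predk n k)) dlt_om; have := pN_ge2.
move: (p ^ N)%N => P hP; rewrite /dlt.
by case: (memI T k); case: (memI R k); case: (memI T (k + 1)); lia.
Qed.

End Cone.

Section Cone2.
Variables (n p : nat) (R S : {set 'I_n.+1}).
Local Notation N := n.+1.
Implicit Types (T : {set 'I_N}) (x c : 'I_N -> int).
Hypothesis p_gt1 : (1 < p)%N.

Lemma absz_dlt (U : {set 'I_N}) k : `|dlt U k|%N = 1%N.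
Proof. by rewrite /dlt; case: (memI U k). Qed.

Lemma Mv_inj0 d : (forall j, Mv p R S d j = 0) -> forall j, d j = 0.
Proof.
move=> h.
have [t _ tmax] := @arg_maxnP _ ord0 xpredT (fun i => `|d i|%N) isT.
set u : 'I_N := om (t + n).
have := h u; rewrite MvE succ_pred => /eqP; rewrite subr_eq0 => /eqP e.
have e2 : (`|d u| = p * `|d t|)%N.
  by move: (congr1 absz e); rewrite !abszM abszN !absz_dlt mul1n muln1 natz.
have le := tmax u isT; rewrite e2 in le.
have : (2 * `|d t| <= p * `|d t|)%N by rewrite leq_mul2r p_gt1 orbT.
move=> le2 j; apply/eqP; rewrite -absz_eq0.
have := tmax j isT; lia.
Qed.

Lemma counter T (s j : 'I_N) : Tprime_cond R S T -> s \in S -> s \in T ->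
  j \in S -> j != s -> exists x, p_cone p T S x /\ ~ C_pHa p R S x.
Proof.
move=> hc hs hsT hj njs.
set K : int := (p ^ N)%:R + 1.
set c := fun i : 'I_N => K * (i == s)%:R + (-1) * (i == j)%:R.
exists (Mv p R S c); split.
  move=> r hr; rewrite FMc.
  have -> : \sum_u c u * W p R S T r u =
      \sum_u (K * W p R S T r u) * (u == s)%:R + \sum_u (- W p R S T r u) * (u == j)%:R.
    by rewrite -big_split; apply: eq_bigr => u _; rewrite /c /=; ring.
  rewrite !sum_pick.
  have h1 : W p R S T r s <= -1.
    rewrite W_in // (dlt_in hsT); have := pk_ge1 p_gt1 (ka r s); have := pN_ge1 n p_gt1.
    by case: eqP => _; lia.
  have h2 : - ((p ^ N)%:R + 1) <= W p R S T r j.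
    rewrite W_in //; have := pk2 p_gt1 (ka r j); have := pN_ge1 n p_gt1.
    by case: eqP => _; case: (dlt_cases T j) => ->; lia.
  have hK : 0 <= K by rewrite /K; have := pN_ge1 n p_gt1; lia.
  have := ler_wpM2l hK h1; rewrite /K; lia.
case=> m [m0 [c' [c'S hc']]].
have h0 : forall j', Mv p R S (fun i => 1 * c' i + (- m%:Z) * c i) j' = 0.
  move=> j'; rewrite Mv_lin -[Mv p R S c' j']/(\sum_i c' i * ha p R S i j') -hc'; ring.
have := Mv_inj0 h0 j; rewrite /c eqxx (negbTE njs) => e.
have := c'S j hj; have : (0 < m%:Z) by rewrite ltz_nat.
lia.
Qed.

Lemma build T x : Tprime_cond R S T -> (forall s, s \in S -> s \notin T) ->
  p_cone p T S x -> C_pHa p R S x.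
Proof.
move=> hc hST hx.
have P1 := pN_ge2 n p_gt1.
exists (p ^ N).-1; split; first by rewrite -ltz_nat predn_int ?expn_gt0 ?(ltnW p_gt1) //; lia.
exists (fun t => dlt S t * dlt T t * Fp p T t x); split.
  move=> t ht; rewrite (dlt_in ht) (dlt_out (hST _ ht)); have := hx t ht; lia.
move=> j; rewrite -/(Mv p R S _ j) MvE !dlt_om Fp_mod.
have ratio : dlt S (j + 1) * dlt T (j + 1) = - dlt R j * dlt T j.
  case hj: (memI S (j + 1)).
    rewrite (ratio2 hc hj) /dlt hj.
    have : om (j + 1) \notin T by apply: hST; rewrite -memIE.
    by rewrite -memIE => /negbTE ->; case: (memI R j); lia.
  rewrite (ratio1 hc (negbT hj)) /dlt hj; ring.
rewrite ratio (Fp_tele p T j x) om_val addn1.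
rewrite predn_int ?expn_gt0 ?(ltnW p_gt1) // -natz.
by case: (dlt_cases S j) => ->; case: (dlt_cases T j) => ->;
   case: (dlt_cases R j) => ->; ring.
Qed.

End Cone2.

Section Comp.
Variables (n : nat) (R S : {set 'I_n.+1}).
Local Notation N := n.+1.
Local Notation sc u := (om (u + 1) : 'I_N).
Local Notation pr u := (om (u + n) : 'I_N).
Local Notation e := (chain_edge S).

Lemma edgeE (a b : 'I_N) :
  e a b = ((b == sc a) && (sc a \notin S)) || ((a == sc b) && (sc b \notin S)).
Proof. by rewrite /chain_edge !idxE !memIE. Qed.

Lemma e_sym : symmetric e.
Proof. by move=> a b; rewrite /chain_edge orbC. Qed.

Fixpoint hdN (f k : nat) : nat :=
  if f is f'.+1 then (if memI S k then k else hdN f' (k + n)) else k.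

Definition h (i : 'I_N) : 'I_N := om (hdN N i).

Lemma hd_stab f : forall k g, memI S (hdN f k) -> hdN (f + g) k = hdN f k.
Proof.
elim: f => [|f IH] k g /=.
  by case: g => [//|g] /= ->.
case hk: (memI S k) => hs //; exact: IH.
Qed.

Lemma hd_reach f : forall k d, (d <= f)%N -> memI S (k + d * n) -> memI S (hdN f k).
Proof.
elim: f => [|f IH] k d /=.
  by rewrite leqn0 => /eqP ->; rewrite mul0n addn0.
case hk: (memI S k) => // hd.
case: d hd => [|d] hd; first by rewrite mul0n addn0 hk.
by move=> hs; apply: (IH _ d) => //; rewrite -addnA -mulSn.
Qed.

Lemma back (s : 'I_N) : s \in S -> forall k, exists2 d, (d <= n)%N & memI S (k + d * n).
Proof.
move=> hs k; set d := ((k %% N + N - s) %% N)%N.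
exists d; first by rewrite -ltnS ltn_pmod.
rewrite (@memI_mod n S _ s) ?memI_ord //.
have e1 : (s + d = k %[mod N])%N.
  rewrite /d modnDmr.
  have -> : (s + (k %% N + N - s) = k %% N + N)%N by have := ltn_ord s; lia.
  by rewrite modnDr modn_mod.
have e2 : (k + d * n + d = k %[mod N])%N.
  by rewrite -addnA -mulnSr addnC modnMDl.
by apply/eqP; rewrite -(eqn_modDr d) e2 e1.
Qed.

Lemma hd_mod f : forall k k', (k = k' %[mod N])%N -> (hdN f k = hdN f k' %[mod N])%N.
Proof.
elim: f => [//|f IH] k k' hk /=.
rewrite (memI_mod _ hk); case: ifP => // _; apply: IH.
by rewrite -modnDml hk modnDml.
Qed.

Variable s0 : 'I_N.
Hypothesis s0S : s0 \in S.

Lemma h_in i : h i \in S.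
Proof.
rewrite -memIE; have [d dn hd] := back s0S i.
by apply: (hd_reach (d := d)) => //; apply: leqW.
Qed.

Lemma h_fix i : i \in S -> h i = i.
Proof. by move=> hi; rewrite /h /= memI_ord hi om_val. Qed.

Lemma h_pred i : i \notin S -> h i = h (pr i).
Proof.
move=> hi; rewrite /h -(hd_stab 1 (k := i)); last by rewrite memIE; exact: h_in.
have step : hdN N.+1 i = hdN N (i + n) by rewrite [LHS]/= memI_ord (negbTE hi).
rewrite addn1 step; apply: om_modE; apply: hd_mod.
by rewrite /= modn_mod.
Qed.

Lemma edge_h a b : e a b -> h a = h b.
Proof.
rewrite edgeE => /orP[] /andP[/eqP -> hs].
  by rewrite [RHS](h_pred hs) pred_succ.
by rewrite (h_pred hs) pred_succ.
Qed.

Lemma conn_hd f : forall k, connect e (om k) (om (hdN f k)).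
Proof.
elim: f => [|f IH] k /=; first exact: connect0.
case: ifP => hk; first exact: connect0.
apply: connect_trans (IH (k + n)); apply: connect1; rewrite edgeE.
have -> : sc (om (k + n) : 'I_N) = om k by apply: om_modE; rewrite /= modnDml -addnA addn1 modnDr.
by rewrite eqxx -(memIE S k) hk orbT.
Qed.

Lemma conn_h i : connect e i (h i).
Proof. by have := conn_hd N i; rewrite om_val. Qed.

Local Notation C c := (chain_component S c).

Lemma comp_h c y : y \in C c -> h y = h c.
Proof.
rewrite inE => hy.
have cl : closed e [pred z | h z == h c].
  by move=> a b /edge_h hab; rewrite !inE hab.
have := closed_connect cl hy.
by rewrite !inE eqxx => /esym /eqP.
Qed.

Lemma hc_in c : h c \in C c.
Proof. by rewrite inE conn_h. Qed.

Lemma CS c y : y \in C c -> y \in S -> y = h c.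
Proof. by move=> hy ys; rewrite -(comp_h hy) h_fix. Qed.

Lemma C_succ c t : t \in C c -> sc t \notin S -> sc t \in C c.
Proof.
rewrite !inE => ht hs; apply: connect_trans ht _; apply: connect1.
by rewrite edgeE eqxx hs.
Qed.

Lemma C_pred c u : u \in C c -> u \notin S -> pr u \in C c.
Proof.
rewrite !inE => hu hs; apply: connect_trans hu _; apply: connect1.
by rewrite edgeE succ_pred eqxx hs orbT.
Qed.

Lemma reind c (R' : Type) (idx : R') (op : Monoid.com_law idx) (g : 'I_N -> R') :
  \big[op/idx]_(t in C c | sc t \notin S) g (sc t) = \big[op/idx]_(u in C c | u \notin S) g u.
Proof.
rewrite [RHS](reindex_inj (@succ_inj n)); apply: eq_bigl => t /=.
case hs: (sc t \in S); rewrite ?andbF //= !andbT.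
apply/idP/idP => h1; first exact: C_succ h1 (negbT hs).
by have := C_pred h1 (negbT hs); rewrite pred_succ.
Qed.

Variable T : {set 'I_N}.
Hypothesis hcT : Tprime_cond R S T.

Lemma par c : (h c \notin T) = (odd #|C c :&: R| != odd #|C c|).
Proof.
set D := C c.
have hin : h c \in D := hc_in c.
have sq : forall (F : 'I_N -> int), (forall j, F j * F j = 1) ->
    (\prod_(t in D | sc t \notin S) F t) * (\prod_(t in D | sc t \notin S) F t) = 1.
  by move=> F hF; rewrite -big_split /=; apply: big1 => j _; exact: hF.
have eqD : forall (F : 'I_N -> int),
    \prod_(j in D | j != h c) F j = \prod_(j in D | j \notin S) F j.
  move=> F; apply: eq_bigl => j.
  apply/andP/andP => [[jD jn]|[jD jS]]; split => //.
    by apply/negP => jS; move: jn; rewrite (CS jD jS) eqxx.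
  by apply: contraNneq jS => ->; exact: h_in.
have E1 : \prod_(j in D) dlt T j = dlt T (h c) * \prod_(j in D | j \notin S) dlt T j.
  by rewrite (bigD1 (h c)) //= eqD.
have E3 : \prod_(j in D | j \notin S) dlt T j
          = \prod_(t in D | sc t \notin S) (- dlt R t * dlt T t).
  rewrite -(reind c); apply: eq_bigr => t /andP[_ ht].
  by rewrite dlt_om (ratio1 hcT) // memIE.
have E4 : \prod_(j in D) dlt T j = \prod_(t in D | sc t \in S) dlt R t
           * \prod_(t in D | sc t \notin S) dlt T t.
  rewrite (bigID (fun t : 'I_N => sc t \in S)) /=; congr (_ * _).
  by apply: eq_bigr => t /andP[_ ht]; rewrite (ratio2 hcT) // memIE.
have ER : \prod_(j in D) dlt R j = (-1) ^+ #|D :&: R|.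
  rewrite -prodr_const (bigID (fun t : 'I_N => t \in R)) /= [X in _ * X]big1 ?mulr1.
    apply: eq_big => t; first by rewrite in_setI.
    by move=> /andP[_ ht]; rewrite dlt_in.
  by move=> t /andP[_ /dlt_out].
have EA : \prod_(t in D | sc t \notin S) (-1 : int) = - (-1) ^+ #|D|.
  rewrite (reind c _ (fun _ : 'I_N => (-1 : int))) -eqD.
  have : \prod_(j in D) (-1 : int) = -1 * \prod_(j in D | j != h c) (-1 : int).
    by rewrite (bigD1 (h c)).
  by rewrite prodr_const => ->; rewrite mulN1r opprK.
have E3' : \prod_(j in D | j \notin S) dlt T j = (\prod_(t in D | sc t \notin S) - dlt R t)
    * (\prod_(t in D | sc t \notin S) dlt T t) by rewrite E3 big_split.
move: E1 E4; rewrite E3'.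
set X := \prod_(t in D | sc t \notin S) dlt T t.
set Y := \prod_(t in D | sc t \notin S) - dlt R t.
set Z := \prod_(t in D | sc t \in S) dlt R t => E1 E4.
have hX : X * X = 1 by apply: sq => j; exact: dlt_sq.
have hY : Y * Y = 1 by apply: sq => j; rewrite mulrNN dlt_sq.
have e1 : dlt T (h c) * Y = Z.
  have : dlt T (h c) * Y * (X * X) = Z * (X * X).
    by rewrite !mulrA -(mulrA _ Y X) -E1 E4.
  by rewrite hX !mulr1.
have e2 : dlt T (h c) = Z * Y by rewrite -e1 -mulrA hY mulr1.
have eY : Y = \prod_(t in D | sc t \notin S) (-1 : int) * \prod_(t in D | sc t \notin S) dlt R t.
  by rewrite /Y -big_split; apply: eq_bigr => t _; rewrite /= mulN1r.
have e3 : dlt T (h c) = - (-1) ^+ #|D :&: R| * (-1) ^+ #|D|.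
  rewrite e2 eY EA mulrA mulrC mulrA.
  have -> : \prod_(t in D | sc t \notin S) dlt R t * Z = \prod_(j in D) dlt R j.
    by rewrite [RHS](bigID (fun t : 'I_N => sc t \in S)) /= mulrC.
  by rewrite ER; ring.
move: e3; rewrite /dlt memI_ord -(signr_odd _ #|D :&: R|) -(signr_odd _ #|D|).
by case: (h c \in T); case: (odd #|D :&: R|); case: (odd #|D|) => /=; rewrite ?expr0 ?expr1; lia.
Qed.

End Comp.

Unset Implicit Arguments.

Theorem mainTheorem7 (n p : nat) (R S : {set 'I_n}) :
  (0 < n)%N -> prime p -> (1 < #|S|)%N ->
  ((forall x, C_RS p R S x <-> C_pHa p R S x) <->
   (exists T : {set 'I_n}, forall x, C_pHa p R S x <-> p_cone p T S x)) /\
  ((exists T : {set 'I_n}, forall x, C_pHa p R S x <-> p_cone p T S x) <->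
   (forall c : 'I_n,
      odd #|chain_component S c :&: R| != odd #|chain_component S c|)).
Proof.
case: n R S => [//|n] R S _ pp hS.
have p_gt1 := prime_gt1 pp.
have [s0 s0S] : exists s0, s0 \in S by apply/card_gt0P; apply: ltnW.
have exS : exists s, s \in S by exists s0.
have cT := cond_T0 R s0S.
have CRS : forall T', Tprime_cond R S T' -> forall x, C_RS p R S x <-> p_cone p T' S x.
  move=> T' cT' x; split => [[T1 [c1 h1]]|h1]; last by exists T'.
  by rewrite (cond_uniq c1 cT' exS) in h1.
split; split.
- move=> H; exists (T0 R S) => x; split => h.
    by apply/(CRS _ cT x).1; apply/(H x).2.
  by apply/(H x).1; apply/(CRS _ cT x).2.
- move=> [T' H]; have cT' := nec p_gt1 exS (fun x => (H x).1).
  move=> x; split => h.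
    by apply/(H x).2; apply/(CRS _ cT' x).1.
  by apply/(CRS _ cT' x).2; apply/(H x).1.
- move=> [T' H]; have cT' := nec p_gt1 exS (fun x => (H x).1).
  have hST : forall s, s \in S -> s \notin T'.
    move=> s hs; apply/negP => hsT.
    have [j hj] : exists j, j \in S :\ s.
      apply/card_gt0P; move: hS; rewrite (cardsD1 s S) hs; lia.
    rewrite in_setD1 in hj; case/andP: hj => njs hjS.
    have [x [hx nx]] := counter p_gt1 cT' hs hsT hjS njs.
    by apply: nx; apply/(H x).2.
  by move=> c; rewrite -(par s0S cT' c); apply: hST; apply: h_in s0S c.
- move=> H; exists (T0 R S).
  have hST : forall s, s \in S -> s \notin T0 R S.
    by move=> s hs; have := par s0S cT s; rewrite h_fix // => ->; apply: H.
  move=> x; split => hx; first exact: (inc p_gt1 cT hx).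
  exact: (build p_gt1 cT hST hx).
Qed.
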